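(* Let $W$ be a (1-safe) DAW-net and $\mathrm{bc}(W)$ its $\mathcal{BC}$ encoding. For any $\ell\ge0$, if $\rho=(M_0,\eta_0)\xrightarrow{t_0}(M_1,\eta_1)\xrightarrow{t_1}\cdots\xrightarrow{t_{\ell-1}}(M_\ell,\eta_\ell)$ is a sequence of valid firings of $W$ of length $\ell$ with $(M_0,\eta_0)=(M_s,\eta_s)$ the initial state, then $\bigcup_{i=0}^{\ell}\Phi_i(\rho)$ is a stable model of $P_\ell(\mathrm{bc}(W))$.
   Context: **DAW-nets.** Data model $\mathcal{D}=(\mathcal{V},\Delta,\mathrm{dm},\mathrm{ord})$: variables, finite domains $\Delta_i$ assigned by total surjective $\mathrm{dm}$, partial orders $\le_{\Delta_i}$ on some domains. Assignments: partial $\eta$ with $\eta(v)\in\mathrm{dm}(v)$. Guards $\Phi::=\mathit{true}\mid\mathrm{def}(v)\mid t_1=t_2\mid t_1\le t_2\mid\neg\Phi\mid\Phi\wedge\Phi$ ($t_i$ variables or constants), with $t[\eta]=\eta(t)$ for variables on which $\eta$ is defined and $t$ otherwise: $\mathrm{def}(v)$ iff $\eta(v)$ defined; $t_1=t_2$ iff $t_1[\eta],t_2[\eta]$ are constants and equal; $t_1\le t_2$ iff both lie in some ordered $\Delta_i$ and $t_1[\eta]\le_{\Delta_i}t_2[\eta]$. A DAW-net $W=\langle\mathcal{D},(P,T,F),\mathrm{wr},\mathrm{gd}\rangle$ consists of a workflow Petri net with places $\mathit{start},\mathit{sink}$ (presets ${}^\bullet t$, postsets $t^\bullet$), partial functions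 $\mathrm{wr}(t)$ with $\mathrm{wr}(t)(v)\subseteq\mathrm{dm}(v)$, and guards $\mathrm{gd}(t)$. A firing $(M,\eta)\xrightarrow{t}(M',\eta')$ is valid iff $\{p\mid M(p)>0\}\supseteq{}^\bullet t$; $\mathcal{D},\eta\models\mathrm{gd}(t)$; $M'(p)=M(p)-1$ on ${}^\bullet t\setminus t^\bullet$, $M(p)+1$ on $t^\bullet\setminus{}^\bullet t$, else $M(p)$; $\mathrm{dom}(\eta')=\mathrm{dom}(\eta)\cup\{v\mid\mathrm{wr}(t)(v)\neq\emptyset\}\setminus\{v\mid\mathrm{wr}(t)(v)=\emptyset\}$, $\eta'(v)\in\mathrm{wr}(t)(v)$ for $v\in\mathrm{dom}(\mathrm{wr}(t))$, else $\eta'(v)=\eta(v)$. Initial state $(M_s,\eta_s)$: one token in $\mathit{start}$, none elsewhere, $\eta_s$ empty. $W$ is assumed 1-safe. $\mathcal{V}'$: finite set of variables of $W$; $\mathrm{adm}(v)=\bigcup_t\mathrm{wr}(t)(v)$. **$\mathcal{BC}$ semantics.** Fluents have finite domains; laws: dynamic ''$A_0$ after $A'_1,\dots,A'_n$ ifcons $A_{n+1},\dots,A_m$'' ($A_0$ an atom $f=v$ or false; $A'_j$ atoms or action constants), static ''$A_0$ if ... ifcons ...'', and ''initially $f=v$''. $P_\ell(B)$ is the disjunctive program with classical negation $\neg$ and default negation $\sim$ containing: each static law as $i{:}A_0\leftarrow i{:}A_1,\dots,i{:}A_n,\sim\neg(i{:}A_{n+1}),\dots,\sim\neg(i{:}A_m)$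 for $0\le i\le\ell$; each dynamic law as $i{+}1{:}A_0\leftarrow i{:}A'_1,\dots,i{:}A'_n,\sim\neg(i{+}1{:}A_{n+1}),\dots,\sim\neg(i{+}1{:}A_m)$ for $0\le i<\ell$ (a constraint if $A_0$ is false); the fact $0{:}f=v$ for each ''initially $f=v$''; $0{:}f=v\vee\neg(0{:}f=v)$ for all fluents and values; $i{:}a\vee\neg(i{:}a)$ for action constants and $i<\ell$; and for $i\le\ell$ and each fluent $f$ with domain $v_1,\dots,v_k$: $\leftarrow\sim(i{:}f=v_1),\dots,\sim(i{:}f=v_k)$ and $\neg(i{:}f=v)\leftarrow i{:}f=w$ for $v\neq w$. Stable models are answer sets. **The encoding $\mathrm{bc}(W)$.** Fluents $v\in\mathcal{V}'$ with domain $\mathrm{adm}(v)\cup\{\mathrm{null}\}$, Boolean fluents $p\in P$ and $\mathit{trans}$; action constants $t\in T$. Laws: ''$v=o$ after $v=o$ ifcons $v=o$'' ($o\in\mathrm{adm}(v)\cup\{\mathrm{null}\}$); ''$p=o$ after $p=o$ ifcons $p=o$'' ($o$ Boolean); for each $t$: ''$p=\mathrm{false}$ after $t$'' ($p\in{}^\bullet t\setminus t^\bullet$); ''$p=\mathrm{true}$ after $t$'' ($p\in t^\bullet\setminus{}^\bullet t$); ''$v=d$ after $t$ ifcons $v=d$'' ($d\in\mathrm{wr}(t)(v)$); ''$v=\mathrm{null}$ after $t$'' (if $\mathrm{wr}(t)(v)=\emptyset$); ''false after $t$ ifcons $v=d$'' (if $\mathrm{wr}(t)(v)\neq\emptyset$,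 $d\in\{\mathrm{null}\}\cup\mathrm{adm}(v)\setminus\mathrm{wr}(t)(v)$); ''false after $t,s$'' ($t\neq s$); ''false after $t,p=\mathrm{false}$'' ($p\in{}^\bullet t$); ''$\mathit{trans}=\mathrm{true}$ after $t$''; ''initially $\mathit{start}=\mathrm{true}$'', ''initially $p=\mathrm{false}$'' ($p\neq\mathit{start}$), ''initially $v=\mathrm{null}$'', ''initially $\mathit{trans}=\mathrm{true}$''. For each $t$ with $\mathrm{gd}(t)\not\equiv\mathit{true}$, for a chosen formula $\bigvee_{k}t^k_1\wedge\dots\wedge t^k_{n_k}$ equivalent over $\mathcal{D}$ to $\neg\mathrm{gd}(t)$ whose terms are $v=o$ or $\neg\mathrm{def}(v)$, the laws ''false after $t,[\![t^k_1]\!],\dots,[\![t^k_{n_k}]\!]$'', where $[\![v=o]\!]=(v=o)$ and $[\![\neg\mathrm{def}(v)]\!]=(v=\mathrm{null})$. **The sets $\Phi_i(\rho)$.** For $0\le i\le\ell$, $\Phi_i(\rho)=\Phi^\nu_i(\rho)\cup\Phi^\tau_i(\rho)$ where $\Phi^\nu_i(\rho)=\{i{:}p=\mathrm{true},\neg(i{:}p=\mathrm{false})\mid M_i(p)>0\}\cup\{i{:}p=\mathrm{false},\neg(i{:}p=\mathrm{true})\mid M_i(p)=0\}\cup\{i{:}v=o,\neg(i{:}v=\mathrm{null})\mid v\in\mathcal{V}',\eta_i(v)=o\}\cup\{i{:}v=\mathrm{null}\mid\eta_i(v)\text{ undefined}\}\cup\{\neg(i{:}v=o)\mid v\in\mathcal{V}',o\in\mathrm{adm}(v),\eta_i(v)\neq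 o\text{ or undefined}\}\cup\{i{:}\mathit{trans}=\mathrm{true},\neg(i{:}\mathit{trans}=\mathrm{false})\}$, and $\Phi^\tau_i(\rho)=\emptyset$ for $i\ge\ell$, $\{i{:}t_i\}\cup\{\neg(i{:}t)\mid t\in T,t\neq t_i\}$ for $i<\ell$. *)

(* Defs.v *)
From HB Require Import structures.
From Stdlib Require List.
From mathcomp Require Import all_boot.

Set Implicit Arguments.
Unset Strict Implicit.
Unset Printing Implicit Defensive.

Section DataModel.
Variables (V C Dom : finType).
(* V   : the (finite) set of variables of the data model
   C   : the (finite) universe of constants (union of all domains)
   Dom : the index set of the domains Delta_i                         *)

Record data_model := DataModel {
  Delta : Dom -> {set C};
  dm    : V -> Dom;
  ord   : Dom -> option (rel C) }.   (* partial order <=_{Delta_i}, on some domains *)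

Definition data_model_wf (D : data_model) : Prop :=
  (forall i : Dom, exists v : V, dm D v = i) /\
  (forall (i : Dom) (r : rel C), ord D i = Some r ->
     (forall a, a \in Delta D i -> r a a) /\
     (forall a b, a \in Delta D i -> b \in Delta D i -> r a b -> r b a -> a = b) /\
     (forall a b c, a \in Delta D i -> b \in Delta D i -> c \in Delta D i ->
        r a b -> r b c -> r a c)).

(* partial assignments: eta v = None means eta undefined on v *)
Definition assignment := V -> option C.

Definition assignment_ok (D : data_model) (eta : assignment) : Prop :=
  forall v c, eta v = Some c -> c \in Delta D (dm D v).

Inductive term := TVar of V | TConst of C.

Inductive guard :=
  | GTrue
  | GDef of V
  | GEq of term & term
  | GLe of term & term
  | GNeg of guard
  | GAnd of guard & guard.

Definition tval (eta : assignment) (t : term) : V + C :=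
  match t with
  | TVar v => if eta v is Some c then inr c else inl v
  | TConst c => inr c
  end.

Fixpoint ghold (D : data_model) (eta : assignment) (g : guard) : bool :=
  match g with
  | GTrue => true
  | GDef v => eta v != None
  | GEq t1 t2 =>
      match tval eta t1, tval eta t2 with
      | inr a, inr b => a == b
      | _, _ => false
      end
  | GLe t1 t2 =>
      match tval eta t1, tval eta t2 with
      | inr a, inr b =>
          [exists i : Dom,
             if ord D i is Some r then [&& a \in Delta D i, b \in Delta D i & r a b]
             else false]
      | _, _ => false
      end
  | GNeg g1 => ~~ ghold D eta g1
  | GAnd g1 g2 => ghold D eta g1 && ghold D eta g2
  end.

(* terms allowed in the chosen DNF of the negated guard: v = o, or ~def(v) *)
Inductive dlit := DEq of V & C | DUndef of V.

Definition dlit_hold (eta : assignment) (x : dlit) : bool :=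
  match x with
  | DEq v c => eta v == Some c
  | DUndef v => eta v == None
  end.

Definition dnf_hold (eta : assignment) (phi : seq (seq dlit)) : bool :=
  has (fun cj => all (dlit_hold eta) cj) phi.

End DataModel.

Section DAWNet.
Variables (V C Dom P T : finType).

Record dawnet := DAWNet {
  dmod  : data_model V C Dom;
  Fin   : P -> T -> bool;                (* (p,t) \in F *)
  Fout  : T -> P -> bool;                (* (t,p) \in F *)
  start : P;
  sink  : P;
  wr    : T -> V -> option {set C};      (* partial: None = v not in dom(wr t) *)
  gd    : T -> guard V C }.

Definition fedge (W : dawnet) : rel (P + T) := fun x y =>
  match x, y with
  | inl p, inr t => Fin W p t
  | inr t, inl p => Fout W t p
  | _, _ => false
  end.

Definition workflow_net (W : dawnet) : Prop :=
  (forall t, ~~ Fout W t (start W)) /\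
  (forall t, ~~ Fin W (sink W) t) /\
  (forall x : P + T, connect (fedge W) (inl (start W)) x /\ connect (fedge W) x (inl (sink W))).

Definition dawnet_wf (W : dawnet) : Prop :=
  data_model_wf (dmod W) /\ workflow_net W /\
  (forall t v s, wr W t v = Some s -> {subset s <= Delta (dmod W) (dm (dmod W) v)}).

Definition marking := P -> nat.
Definition state := (marking * assignment V C)%type.

Definition fire (W : dawnet) (s : state) (t : T) (s' : state) : Prop :=
  let: (M, eta) := s in
  let: (M', eta') := s' in
  (forall p, Fin W p t -> 0 < M p) /\
  ghold (dmod W) eta (gd W t) /\
  (forall p, M' p = if Fin W p t && ~~ Fout W t p then (M p).-1
                    else if Fout W t p && ~~ Fin W p t then (M p).+1
                    else M p) /\
  (forall v, match wr W t v with
             | None => eta' v = eta v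
             | Some s => if s == set0 then eta' v = None
                         else exists2 c, c \in s & eta' v = Some c
             end).

Definition init_state (W : dawnet) : state :=
  (fun p => if p == start W then 1 else 0, fun _ => None).

Definition run (W : dawnet) (st : nat -> state) (ts : nat -> T) (l : nat) : Prop :=
  st 0 = init_state W /\ forall i, i < l -> fire W (st i) (ts i) (st i.+1).

Definition reachable (W : dawnet) (s : state) : Prop :=
  exists st ts l, run W st ts l /\ st l = s.

Definition one_safe (W : dawnet) : Prop :=
  forall s, reachable W s -> forall p, s.1 p <= 1.

Definition neg_guard_choice (W : dawnet) (ngd : T -> option (seq (seq (dlit V C)))) : Prop :=
  forall t,
    (ngd t = None <->
       forall eta, assignment_ok (dmod W) eta -> ghold (dmod W) eta (gd W t)) /\
    (forall phi, ngd t = Some phi ->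
       forall eta, assignment_ok (dmod W) eta ->
         dnf_hold eta phi = ~~ ghold (dmod W) eta (gd W t)).

Definition adm (W : dawnet) (v : V) : {set C} :=
  \bigcup_(t : T) odflt set0 (wr W t v).

End DAWNet.

Section BC.
Variables (F A : Type) (Val : eqType).

Inductive batom := BFl of F & Val | BAct of A.

(* laws: (head (None = false), after/if-body, ifcons-body) *)

Record bc_desc := BCDesc {
  fdom         : F -> seq Val;
  static_laws  : seq (option (F * Val) * seq (F * Val) * seq (F * Val));
  dynamic_laws : seq (option (F * Val) * seq batom * seq (F * Val));
  init_laws    : seq (F * Val) }.

Inductive gatom := GF of nat & F & Val | GA of nat & A.
(* literals: atom or its classical negation *)
Inductive glit := Pos of gatom | Neg of gatom.

(* head: disjunction; rpos: positive body; rnaf: default-negated body *)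
Record rule := Rule { rhead : seq glit; rpos : seq glit; rnaf : seq glit }.

Definition program := rule -> Prop.
Definition lits := glit -> Prop.

Definition gbatom (i : nat) (a : batom) : gatom :=
  match a with BFl f v => GF i f v | BAct x => GA i x end.

Definition ohead (i : nat) (h : option (F * Val)) : seq glit :=
  if h is Some fv then [:: Pos (GF i fv.1 fv.2)] else [::].

Definition prog (B : bc_desc) (l : nat) : program := fun r =>
  (exists h b c i, List.In (h, b, c) (static_laws B) /\ i <= l /\
     r = Rule (ohead i h) [seq Pos (GF i fv.1 fv.2) | fv <- b]
                          [seq Neg (GF i fv.1 fv.2) | fv <- c])
  \/ (exists h b c i, List.In (h, b, c) (dynamic_laws B) /\ i < l /\
     r = Rule (ohead i.+1 h) [seq Pos (gbatom i a) | a <- b]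
                             [seq Neg (GF i.+1 fv.1 fv.2) | fv <- c])
  \/ (exists f v, List.In (f, v) (init_laws B) /\
     r = Rule [:: Pos (GF 0 f v)] [::] [::])
  \/ (exists f v, v \in fdom B f /\
     r = Rule [:: Pos (GF 0 f v); Neg (GF 0 f v)] [::] [::])
  \/ (exists a i, i < l /\
     r = Rule [:: Pos (GA i a); Neg (GA i a)] [::] [::])
  \/ (exists f i, i <= l /\
     r = Rule [::] [::] [seq Pos (GF i f v) | v <- fdom B f])
  \/ (exists f v w i, i <= l /\ v \in fdom B f /\ w \in fdom B f /\ v <> w /\
     r = Rule [:: Neg (GF i f v)] [:: Pos (GF i f w)] [::]).

Definition consistent (S : lits) : Prop := forall a, ~ (S (Pos a) /\ S (Neg a)).

(* X is closed under the Gelfond-Lifschitz reduct Pi^S *)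
Definition closed_reduct (Pi : program) (S X : lits) : Prop :=
  forall r, Pi r ->
    (forall x, List.In x (rnaf r) -> ~ S x) ->
    (forall x, List.In x (rpos r) -> X x) ->
    exists x, List.In x (rhead r) /\ X x.

Definition stable_model (Pi : program) (S : lits) : Prop :=
  consistent S /\ closed_reduct Pi S S /\
  forall X : lits, (forall x, X x -> S x) -> closed_reduct Pi S X -> forall x, S x -> X x.

End BC.

Arguments BFl {F A Val}.
Arguments BAct {F A Val}.
Arguments GF {F A Val}.
Arguments GA {F A Val}.
Arguments Pos {F A Val}.
Arguments Neg {F A Val}.

Section Encoding.
Variables (V C Dom P T : finType).

Definition bval := (option C + bool)%type.          (* null | constant | Boolean *)
Definition bflu := (V + (P + unit))%type.           (* data var | place | trans *)
Definition vnull : bval := inl None.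
Definition vc (c : C) : bval := inl (Some c).
Definition vb (b : bool) : bval := inr b.
Definition fvar (v : V) : bflu := inl v.
Definition fplace (p : P) : bflu := inr (inl p).
Definition ftrans : bflu := inr (inr tt).

Definition bbatom := batom bflu T bval.
Definition dlaw := (option (bflu * bval) * seq bbatom * seq (bflu * bval))%type.

Variable W : dawnet V C Dom P T.
Variable ngd : T -> option (seq (seq (dlit V C))).

Definition bc_fdom (f : bflu) : seq bval :=
  match f with
  | inl v => vnull :: [seq vc c | c <- enum (adm W v)]
  | inr _ => [:: vb true; vb false]
  end.

Definition tr_dlit (x : dlit V C) : bbatom :=
  match x with
  | DEq v c => BFl (fvar v) (vc c)
  | DUndef v => BFl (fvar v) vnull
  end.

Definition bc_trans_laws (t : T) : seq dlaw :=
  [seq (Some (fplace p, vb false), [:: BAct t], [::]) | p <- enum P & Fin W p t && ~~ Fout W t p]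
  ++ [seq (Some (fplace p, vb true), [:: BAct t], [::]) | p <- enum P & Fout W t p && ~~ Fin W p t]
  ++ flatten [seq [seq (Some (fvar v, vc d), [:: BAct t], [:: (fvar v, vc d)])
                  | d <- enum (odflt set0 (wr W t v))] | v <- enum V]
  ++ [seq (Some (fvar v, vnull), [:: BAct t], [::]) | v <- enum V & wr W t v == Some set0]
  ++ flatten [seq (match wr W t v with
                   | Some s =>
                       if s != set0 then
                         (None, [:: BAct t], [:: (fvar v, vnull)])
                         :: [seq (None, [:: BAct t], [:: (fvar v, vc d)])
                            | d <- enum (adm W v :\: s)]
                       else [::]
                   | None => [::]
                   end : seq dlaw) | v <- enum V]
  ++ [seq (None, [:: BAct t; BAct s], [::]) | s <- enum T & s != t]
  ++ [seq (None, [:: BAct t; BFl (fplace p) (vb false)], [::]) | p <- enum P & Fin W p t]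
  ++ [:: (Some (ftrans, vb true), [:: BAct t], [::])]
  ++ (match ngd t with
      | Some phi => [seq (None, BAct t :: [seq tr_dlit x | x <- cj], [::]) | cj <- phi]
      | None => [::]
      end : seq dlaw).

Definition bc_dynamic : seq dlaw :=
  [seq (Some (fvar v, o), [:: BFl (fvar v) o], [:: (fvar v, o)])
  | v <- enum V, o <- bc_fdom (fvar v)]
  ++ [seq (Some (fplace p, vb b), [:: BFl (fplace p) (vb b)], [:: (fplace p, vb b)])
     | p <- enum P, b <- [:: true; false]]
  ++ flatten [seq bc_trans_laws t | t <- enum T].

Definition bc_init : seq (bflu * bval) :=
  (fplace (start W), vb true)
  :: [seq (fplace p, vb false) | p <- enum P & p != start W]
  ++ [seq (fvar v, vnull) | v <- enum V]
  ++ [:: (ftrans, vb true)].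

Definition bc : bc_desc bflu T bval :=
  BCDesc bc_fdom [::] bc_dynamic bc_init.

Definition Phi_nu (st : nat -> state V C P) (i : nat) (x : glit bflu T bval) : Prop :=
  let M := (st i).1 in let eta := (st i).2 in
  (exists p, 0 < M p /\ (x = Pos (GF i (fplace p) (vb true)) \/ x = Neg (GF i (fplace p) (vb false))))
  \/ (exists p, M p = 0 /\ (x = Pos (GF i (fplace p) (vb false)) \/ x = Neg (GF i (fplace p) (vb true))))
  \/ (exists v o, eta v = Some o /\ (x = Pos (GF i (fvar v) (vc o)) \/ x = Neg (GF i (fvar v) vnull)))
  \/ (exists v, eta v = None /\ x = Pos (GF i (fvar v) vnull))
  \/ (exists v o, o \in adm W v /\ eta v != Some o /\ x = Neg (GF i (fvar v) (vc o)))
  \/ x = Pos (GF i ftrans (vb true))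
  \/ x = Neg (GF i ftrans (vb false)).

Definition Phi_tau (ts : nat -> T) (l i : nat) (x : glit bflu T bval) : Prop :=
  i < l /\ (x = Pos (GA i (ts i)) \/ exists t, t != ts i /\ x = Neg (GA i t)).

Definition Phi (st : nat -> state V C P) (ts : nat -> T) (l i : nat) : lits bflu T bval :=
  fun x => Phi_nu st i x \/ Phi_tau ts l i x.

Definition Phi_union (st : nat -> state V C P) (ts : nat -> T) (l : nat) : lits bflu T bval :=
  fun x => exists i, i <= l /\ Phi st ts l i x.

End Encoding.

(* Main.v *)
Require Import Defs.
From Stdlib Require List.
From mathcomp Require Import all_boot.

Set Implicit Arguments.
Unset Strict Implicit.
Unset Printing Implicit Defensive.

Lemma In_map (A B : Type) (f : A -> B) (s : seq A) y :
  List.In y (map f s) <-> exists x, List.In x s /\ y = f x.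
Proof.
elim: s => [|x s IH] /=; first by split=> // -[x []].
split.
- case=> [E|H]; first by exists x; subst; auto.
  by move/IH: H => [z [Hz ->]]; exists z; auto.
- case=> z [[E|Hz] Ey]; first by left; subst.
  by right; apply/IH; exists z.
Qed.

Lemma In_cat (A : Type) (s1 s2 : seq A) x :
  List.In x (s1 ++ s2) <-> List.In x s1 \/ List.In x s2.
Proof. elim: s1 => [|y s1 IH] /=; first tauto. move: IH; tauto. Qed.

Lemma In_flatten (A : Type) (ss : seq (seq A)) x :
  List.In x (flatten ss) <-> exists s, List.In s ss /\ List.In x s.
Proof.
elim: ss => [|s ss IH] /=; first by split=> // -[s []].
rewrite -/(flatten ss); split.
- case/In_cat=> [H|/IH [s' [H1 H2]]]; first by exists s; auto.
  by exists s'; auto.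
- case=> s' [[<-|H1] H2]; apply/In_cat; first by left.
  by right; apply/IH; exists s'.
Qed.

Lemma In_filter (A : Type) (p : pred A) (s : seq A) x :
  List.In x (filter p s) <-> List.In x s /\ p x.
Proof.
elim: s => [|y s IH] /=; first tauto.
case Hp: (p y) => /=; split.
- case=> [E|H]; first by subst; tauto.
  move/IH: H; tauto.
- case=> [[E|H] Hx]; [by left | right; apply/IH; tauto].
- move/IH; tauto.
- case=> [[E|H] Hx]; first by rewrite -E Hp in Hx.
  by apply/IH.
Qed.

Lemma In_mem (A : eqType) (s : seq A) x : List.In x s <-> x \in s.
Proof.
elim: s => [|y s IH] /=; first by split.
rewrite in_cons; split.
- by case=> [->|/IH ->]; rewrite ?eqxx ?orbT.
- by case/orP=> [/eqP ->|/IH]; auto.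
Qed.

Lemma all_In (A : Type) (p : pred A) (s : seq A) :
  (forall x, List.In x s -> p x) -> all p s.
Proof.
elim: s => [|y s IH] //= H; rewrite H /=; last by left.
by apply: IH => x Hx; apply: H; right.
Qed.

Lemma has_In (A : Type) (p : pred A) (s : seq A) y :
  List.In y s -> p y -> has p s.
Proof.
elim: s => [|z s IH] //= [<- ->//|Hy Hp]; by rewrite IH ?orbT.
Qed.

Section Main.
Variables (V C Dom P T : finType) (W : dawnet V C Dom P T)
  (ngd : T -> option (seq (seq (dlit V C)))).
Hypotheses (hW : dawnet_wf W) (hsafe : one_safe W) (hngd : neg_guard_choice W ngd).
Variables (l : nat) (st : nat -> state V C P) (ts : nat -> T).
Hypothesis hrun : run W st ts l.

Local Notation S := (Phi_union W st ts l).
Local Notation fv_ v := (fvar P v).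
Local Notation fp_ p := (fplace V p).
Local Notation ftr := (Defs.ftrans V P).
Local Notation vn := (vnull C).
Local Notation vb_ b := (vb C b).

Definition val (i : nat) (f : bflu V P) : bval C :=
  match f with
  | inl v => if (st i).2 v is Some c then vc c else vn
  | inr (inl p) => vb_ (0 < (st i).1 p)
  | inr (inr _) => vb_ true
  end.

Lemma fire_at i : i < l -> fire W (st i) (ts i) (st i.+1).
Proof. by move=> Hi; apply: hrun.2. Qed.

Lemma fireP (s : state V C P) t s' : fire W s t s' ->
  [/\ (forall p, Fin W p t -> 0 < s.1 p), ghold (dmod W) s.2 (gd W t),
     (forall p, s'.1 p = if Fin W p t && ~~ Fout W t p then (s.1 p).-1
                    else if Fout W t p && ~~ Fin W p t then (s.1 p).+1 else s.1 p) &
     (forall v, match wr W t v with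
             | None => s'.2 v = s.2 v
             | Some s0 => if s0 == set0 then s'.2 v = None
                         else exists2 c, c \in s0 & s'.2 v = Some c
             end)].
Proof. by case: s => M0 e0; case: s' => M1 e1 [? [? [? ?]]]. Qed.

Lemma safe i p : i <= l -> (st i).1 p <= 1.
Proof.
move=> Hi; apply: (hsafe (s := st i)).
exists st, ts, i; split=> //; split; first exact: hrun.1.
by move=> j Hj; apply: hrun.2; apply: leq_trans Hj Hi.
Qed.

Lemma adm_of t v s0 c : wr W t v = Some s0 -> c \in s0 -> c \in adm W v.
Proof. by move=> H Hc; apply/bigcupP; exists t => //; rewrite H. Qed.

Lemma inv i : i <= l -> forall v c, (st i).2 v = Some c ->
  c \in adm W v /\ c \in Delta (dmod W) (dm (dmod W) v).
Proof.
elim: i => [|i IH] Hi v c.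
- by rewrite hrun.1.
- have [_ _ _ Hw] := fireP (fire_at Hi).
  move: (Hw v); case Hwv: (wr W (ts i) v) => [s0|].
  + case: eqP => [_ -> //|_ [c' Hc' ->] [<-]].
    split; first exact: adm_of Hwv Hc'.
    exact: hW.2.2 _ _ _ Hwv _ Hc'.
  + move=> ->; apply: IH; exact: ltnW.
Qed.

Lemma val_fdom i f : i <= l -> val i f \in bc_fdom W f.
Proof.
move=> Hi; case: f => [v|[p|[]]] /=.
- case He: ((st i).2 v) => [c|]; last by rewrite inE eqxx.
  rewrite inE; apply/orP; right; apply/map_f; rewrite mem_enum; exact: (inv Hi He).1.
- by rewrite !inE; case: (0 < _).
- by rewrite inE eqxx.
Qed.

Lemma S_posF i f x : S (Pos (GF i f x)) <-> i <= l /\ x = val i f.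
Proof.
split.
- move=> [j [Hj [Hnu|[_ Htau]]]]; last first.
    by case: Htau => [//|[t [_ //]]].
  rewrite /Phi_nu /= in Hnu.
  case: Hnu => [[p [Hp [E|E]]]|[[p [Hp [E|E]]]|[[v [o [Ho [E|E]]]]|[[v [Hv E]]|[[v [o [_ [_ E]]]]|[E|E]]]]]] //;
    case: E => E1 E2 E3; subst; split=> //=; by rewrite ?Hp ?Ho ?Hv.
- move=> [Hi ->]; exists i; split=> //; left; rewrite /Phi_nu /=.
  case: f => [v|[p|[]]] /=.
  + case He: ((st i).2 v) => [c|].
    * by right; right; left; exists v, c; split=> //; left.
    * by right; right; right; left; exists v; split.
  + case Hp: (0 < (st i).1 p).
    * by left; exists p; split=> //; left.
    * right; left; exists p; split; last by left.
      by move/negbT: Hp; rewrite -eqn0Ngt => /eqP.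
  + by do 5 right; left.
Qed.

Lemma S_negF i f x : S (Neg (GF i f x)) <-> i <= l /\ x \in bc_fdom W f /\ x <> val i f.
Proof.
split.
- move=> [j [Hj [Hnu|[_ Htau]]]]; last first.
    by case: Htau => [//|[t [_ //]]].
  rewrite /Phi_nu /= in Hnu.
  case: Hnu => [[p [Hp [E|E]]]|[[p [Hp [E|E]]]|[[v [o [Ho [E|E]]]]|[[v [Hv E]]|[[v [o [Ha [Hne E]]]]|[E|E]]]]]] //;
    case: E => E1 E2 E3; subst; split=> //=; rewrite ?Hp ?Ho ?inE ?eqxx ?orbT //.
  split; first by apply/orP; right; apply: map_f; rewrite mem_enum.
  case: ((st j).2 v) Hne => [c|] // Hne [Ec]; by rewrite Ec eqxx in Hne.
- move=> [Hi [Hx Hne]]; exists i; split=> //; left; rewrite /Phi_nu /=.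
  case: f Hx Hne => [v|[p|[]]] /= Hx Hne.
  + rewrite inE in Hx; case/orP: Hx => [/eqP Ex|/mapP [o Ho Ex]]; subst.
    * case He: ((st i).2 v) Hne => [c|] // _.
      by right; right; left; exists v, c; split=> //; right.
    * right; right; right; right; left; exists v, o; split; first by rewrite mem_enum in Ho.
      split=> //; apply/negP => /eqP He; by rewrite He in Hne.
  + rewrite !inE in Hx; case/orP: Hx => /eqP Ex; subst.
    * case Hp: (0 < (st i).1 p) Hne => // _.
      right; left; exists p; split; last by right.
      by move/negbT: Hp; rewrite -eqn0Ngt => /eqP.
    * case Hp: (0 < (st i).1 p) Hne => // _.
      by left; exists p; split=> //; right.
  + rewrite !inE in Hx; case/orP: Hx => /eqP Ex; subst => //.
    by do 6 right.
Qed.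

Lemma S_posA i a : S (Pos (GA i a)) <-> i < l /\ a = ts i.
Proof.
split.
- move=> [j [Hj [Hnu|[Hjl Htau]]]].
  + rewrite /Phi_nu /= in Hnu.
    by case: Hnu => [[p [Hp [E|E]]]|[[p [Hp [E|E]]]|[[v [o [Ho [E|E]]]]|[[v [Hv E]]|[[v [o [Ha [Hne E]]]]|[E|E]]]]]].
  + case: Htau => [[E1 E2]|[t [_ //]]]; by subst.
- move=> [Hi ->]; exists i; split; first exact: ltnW.
  by right; split=> //; left.
Qed.

Lemma S_negA i a : S (Neg (GA i a)) <-> i < l /\ a <> ts i.
Proof.
split.
- move=> [j [Hj [Hnu|[Hjl Htau]]]].
  + rewrite /Phi_nu /= in Hnu.
    by case: Hnu => [[p [Hp [E|E]]]|[[p [Hp [E|E]]]|[[v [o [Ho [E|E]]]]|[[v [Hv E]]|[[v [o [Ha [Hne E]]]]|[E|E]]]]]].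
  + case: Htau => [//|[t [Ht [E1 E2]]]]; subst; split=> //; exact/eqP.
- move=> [Hi Hne]; exists i; split; first exact: ltnW.
  by right; split=> //; right; exists a; split=> //; apply/eqP.
Qed.

Lemma S_cons : consistent S.
Proof.
move=> [i f x|i a] [H1 H2].
- by case/S_posF: H1 => _ E; case/S_negF: H2 => _ [_ []].
- by case/S_posA: H1 => _ E; case/S_negA: H2.
Qed.

Lemma dich i f x : i <= l -> x \in bc_fdom W f -> S (Pos (GF i f x)) \/ S (Neg (GF i f x)).
Proof.
move=> Hi Hx; case: (eqVneq x (val i f)) => [->|Hne].
- by left; apply/S_posF.
- by right; apply/S_negF; split=> //; split=> //; apply/eqP.
Qed.

Definition dyn_ok (d : dlaw V C P T) : Prop :=
  forall i, i < l ->
   (forall fv, List.In fv d.2 -> ~ S (Neg (GF i.+1 fv.1 fv.2))) ->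
   (forall a, List.In a d.1.2 -> S (Pos (gbatom i a))) ->
   exists x, List.In x (@Defs.ohead _ T _ i.+1 d.1.1) /\ S x.

Lemma selfcons f o b : o \in bc_fdom W f -> dyn_ok (Some (f, o), b, [:: (f, o)]).
Proof.
move=> Ho i Hi Hn _; exists (Pos (GF i.+1 f o)); split; first by left.
by case: (dich Hi Ho) => // H; case: (Hn (f, o) (or_introl erefl)).
Qed.

Lemma act_ts i t b : (forall a, List.In a (BAct t :: b) -> S (Pos (gbatom i a))) -> t = ts i.
Proof. by move=> Hb; have /S_posA [_ ->] := Hb _ (or_introl erefl). Qed.

Lemma trans_ok t d : List.In d (bc_trans_laws W ngd t) -> dyn_ok d.
Proof.
rewrite /bc_trans_laws.
move=> /In_cat [H|/In_cat [H|/In_cat [H|/In_cat [H|/In_cat [H|/In_cat [H|/In_cat [H|/In_cat [H|H]]]]]]]].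
- move/In_map: H => [p [/In_filter [_ Hp] ->]] i Hi _ Hb.
  have Et := act_ts Hb; subst t.
  exists (Pos (GF i.+1 (fp_ p) (vb_ false))); split; first by left.
  apply/S_posF; split => //.
  have [Hpre _ HM _] := fireP (fire_at Hi).
  rewrite /= HM Hp.
  have := safe p (ltnW Hi); have := Hpre p (andP Hp).1.
  by case: ((st i).1 p) => [|[|n]].
- move/In_map: H => [p [/In_filter [_ Hp] ->]] i Hi _ Hb.
  have Et := act_ts Hb; subst t.
  exists (Pos (GF i.+1 (fp_ p) (vb_ true))); split; first by left.
  apply/S_posF; split => //.
  have [Hpre _ HM _] := fireP (fire_at Hi).
  move/andP: Hp => [Ho Hn].
  by rewrite /= HM Ho (negbTE Hn).
- move/In_flatten: H => [s [/In_map [v [_ ->]] /In_map [c [Hc ->]]]].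
  apply: selfcons; rewrite /= inE; apply/orP; right; apply: map_f.
  rewrite mem_enum; move/In_mem: Hc; rewrite mem_enum => Hc.
  by apply/bigcupP; exists t.
- move/In_map: H => [v [/In_filter [_ Hw] ->]] i Hi _ Hb.
  have Et := act_ts Hb; subst t.
  exists (Pos (GF i.+1 (fv_ v) vn)); split; first by left.
  apply/S_posF; split => //.
  have [_ _ _ Hw'] := fireP (fire_at Hi).
  by move: (Hw' v); rewrite (eqP Hw) eqxx /= => ->.
- move/In_flatten: H => [s [/In_map [v [_ ->]] Hd]].
  move: Hd; case Hwv: (wr W t v) => [s0|] //=.
  case: ifP => // Hs0 Hd i Hi Hn Hb; exfalso.
  case: Hd => [Ed|/In_map [c [Hc Ed]]]; subst d.
  + have Et := act_ts Hb; subst t.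
    apply: (Hn _ (or_introl erefl)); apply/S_negF; split=> //.
    have [_ _ _ Hw'] := fireP (fire_at Hi).
    move: (Hw' v); rewrite Hwv (negbTE Hs0) => -[c' Hc' He].
    by rewrite /= He inE eqxx.
  + have Et := act_ts Hb; subst t.
    apply: (Hn _ (or_introl erefl)); apply/S_negF; split=> //.
    have [_ _ _ Hw'] := fireP (fire_at Hi).
    move: (Hw' v); rewrite Hwv (negbTE Hs0) => -[c' Hc' He].
    move/In_mem: Hc; rewrite mem_enum inE => /andP [Hcs Hca].
    rewrite /= He inE; split.
    * by apply/orP; right; apply: map_f; rewrite mem_enum.
    * by move=> [Ec]; subst c'; rewrite Hc' in Hcs.
- move/In_map: H => [s [/In_filter [_ Hs] ->]] i Hi _ Hb.
  have Et := act_ts Hb; subst t.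
  have /S_posA [_ Es] := Hb _ (or_intror (or_introl erefl)).
  by rewrite Es eqxx in Hs.
- move/In_map: H => [p [/In_filter [_ Hp] ->]] i Hi _ Hb.
  have Et := act_ts Hb; subst t.
  have /S_posF [_ /=] := Hb _ (or_intror (or_introl erefl)).
  have [Hpre _ _ _] := fireP (fire_at Hi).
  by rewrite (Hpre p Hp).
- case: H => [<-|//] i Hi _ _.
  exists (Pos (GF i.+1 ftr (vb_ true))); split; first by left.
  by apply/S_posF.
- move: H; case Hg: (ngd t) => [phi|] //= /In_map [cj [Hcj ->]] i Hi _ Hb.
  have Et := act_ts Hb; subst t.
  have Hall : all (dlit_hold (st i).2) cj.
    apply: all_In => x Hx.
    have := Hb (tr_dlit P T x) (or_intror (proj2 (In_map _ _ _) (ex_intro _ x (conj Hx erefl)))).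
    case: x {Hx} => [v c|v] /S_posF [_] /=; case: ((st i).2 v) => [c'|] //.
    * by case=> ->.
  have Hd : dnf_hold (st i).2 phi by apply: has_In Hcj Hall.
  have Hok : assignment_ok (dmod W) (st i).2.
    by move=> v c He; exact: (inv (ltnW Hi) He).2.
  have := (hngd (ts i)).2 phi Hg _ Hok.
  have [_ Hg' _ _] := fireP (fire_at Hi).
  by rewrite Hd Hg'.
Qed.

Lemma dyn_all d : List.In d (bc_dynamic W ngd) -> dyn_ok d.
Proof.
move=> /In_cat [H|/In_cat [H|H]].
- move/In_flatten: H => [s [/In_map [v [_ ->]] /In_map [o [Ho ->]]]].
  by apply: selfcons; apply/In_mem.
- move/In_flatten: H => [s [/In_map [p [_ ->]] /In_map [b [Hb ->]]]].
  by apply: selfcons; case: b {Hb}; rewrite /= !inE eqxx ?orbT.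
- move/In_flatten: H => [s [/In_map [t [_ ->]] Hd]].
  exact: trans_ok Hd.
Qed.

Lemma S_closed : closed_reduct (prog (bc W ngd) l) S S.
Proof.
move=> r Hr Hn Hp.
case: Hr => [[h [b [c [i [Hin _]]]]]|[[h [b [c [i [Hin [Hi Er]]]]]]|[[f [v [Hin Er]]]|[[f [v [Hv Er]]]|[[a [i [Hi Er]]]|[[f [i [Hi Er]]]|[f [v [w [i [Hi [Hv [Hw [Hne Er]]]]]]]]]]]]]]; try subst r.
- by [].
- have H := dyn_all Hin; rewrite /dyn_ok /= in H; apply: H Hi _ _.
  + move=> fv Hfv; apply: Hn; apply/In_map; exists fv; split=> //.
  + move=> a Ha; apply: Hp; apply/In_map; exists a; split=> //.
- exists (Pos (GF 0 f v)); split; first by left.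
  apply/S_posF; split=> //.
  rewrite /= /bc_init /= in Hin.
  case: Hin => [[E1 E2]|/In_cat [/In_map [p [/In_filter [_ Hps] [E1 E2]]]|/In_cat [/In_map [x [_ [E1 E2]]]|[[E1 E2]|//]]]];
    subst; rewrite /= ?hrun.1 /= ?eqxx //.
  by rewrite (negbTE Hps).
- case: (dich (leq0n l) Hv) => H.
  + by exists (Pos (GF 0 f v)); split=> //; left.
  + by exists (Neg (GF 0 f v)); split=> //; right; left.
- case: (eqVneq a (ts i)) => [Ea|Ha].
  + by exists (Pos (GA i a)); split; [left | apply/S_posA].
  + by exists (Neg (GA i a)); split; [right; left | apply/S_negA; split=> //; apply/eqP].
- exfalso; apply: (Hn (Pos (GF i f (val i f)))); last by apply/S_posF.
  apply/In_map; exists (val i f); split=> //; apply/In_mem; exact: val_fdom.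
- have /S_posF [_ Ew] := Hp _ (or_introl erefl).
  exists (Neg (GF i f v)); split; first by left.
  by apply/S_negF; split=> //; split=> //; rewrite -Ew.
Qed.

Lemma In_trans t d : List.In d (bc_trans_laws W ngd t) -> List.In d (bc_dynamic W ngd).
Proof.
move=> Hd; apply/In_cat; right; apply/In_cat; right; apply/In_flatten.
exists (bc_trans_laws W ngd t); split=> //; apply/In_map; exists t; split=> //.
by apply/In_mem; rewrite mem_enum.
Qed.

Lemma S_min (X : lits (bflu V P) T (bval C)) :
  (forall x, X x -> S x) -> closed_reduct (prog (bc W ngd) l) S X -> forall x, S x -> X x.
Proof.
move=> Hsub Hcl.
have pick : forall a y, (X (Pos a) \/ X (Neg a)) -> (y = Pos a \/ y = Neg a) -> S y -> X y.
  move=> a y [H|H] [->|->] // Sy; exfalso; apply: (S_cons (a := a)); split=> //; exact: Hsub.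
have choice2 : forall a, (exists x, List.In x [:: Pos a; Neg a] /\ X x) -> X (Pos a) \/ X (Neg a).
  by move=> a [x [[<-|[<-|[]]] Hx]]; auto.
have act : forall i a y, i < l -> (y = Pos (GA i a) \/ y = Neg (GA i a)) -> S y -> X y.
  move=> i a y Hi Hy Sy; apply: pick Hy Sy; apply: choice2.
  apply: (Hcl (Rule [:: Pos (GA i a); Neg (GA i a)] [::] [::])) => //; do 4 right; left; by exists a, i.
have dyn : forall i h b c, i < l -> List.In (h, b, c) (bc_dynamic W ngd) ->
    (forall fv, List.In fv c -> ~ S (Neg (GF i.+1 fv.1 fv.2))) ->
    (forall a, List.In a b -> X (Pos (gbatom i a))) ->
    exists x, List.In x (@Defs.ohead _ T _ i.+1 h) /\ X x.
  move=> i h b c Hi Hin Hn Hb.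
  apply: (Hcl (Rule (@Defs.ohead _ T _ i.+1 h) [seq Pos (gbatom i a) | a <- b]
                             [seq Neg (GF i.+1 fv.1 fv.2) | fv <- c])).
  - by right; left; exists h, b, c, i.
  - by move=> x /In_map [fv [Hfv ->]]; apply: Hn.
  - by move=> x /In_map [a [Ha ->]]; apply: Hb.
have dyn1 : forall i f o b c, i < l -> List.In (Some (f, o), b, c) (bc_dynamic W ngd) ->
    (forall fv, List.In fv c -> ~ S (Neg (GF i.+1 fv.1 fv.2))) ->
    (forall a, List.In a b -> X (Pos (gbatom i a))) -> X (Pos (GF i.+1 f o)).
  move=> i f o b c Hi Hin Hn Hb; have [x [[<-|[]] Hx]] := dyn i _ b c Hi Hin Hn Hb; done.
have actX : forall i, i < l -> forall a, List.In a [:: BAct (ts i)] -> X (Pos (gbatom i a)).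
  move=> i Hi a [<-|[]]; apply: (act i (ts i)) => //; first by left.
  by apply/S_posA.
have nself : forall i f, i < l -> forall fv, List.In fv [:: (f, val i.+1 f)] -> ~ S (Neg (GF i.+1 fv.1 fv.2)).
  by move=> i f Hi fv [<-|[]] /S_negF [_ [_ []]].
have main : forall i, i <= l -> forall f, X (Pos (GF i f (val i f))).
  elim=> [|i IH] Hi f.
  - apply: (pick (GF 0 f (val 0 f))); [|by left|by apply/S_posF].
    apply: choice2; apply: (Hcl (Rule [:: Pos (GF 0 f (val 0 f)); Neg (GF 0 f (val 0 f))] [::] [::])) => //; do 3 right; left.
    by exists f, (val 0 f); split=> //; apply: val_fdom.
  - have IH' := IH (ltnW Hi).
    have [Hpre Hg HM Hw] := fireP (fire_at Hi).
    case: f => [v|[p|[]]].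
    + move: (Hw v); case Hwv: (wr W (ts i) v) => [s0|].
      * case: eqP => [Hs0 He'| Hs0 [c Hc He']].
        - have -> : val i.+1 (fv_ v) = vn by rewrite /= He'.
          apply: (dyn1 i _ _ [:: BAct (ts i)] [::] Hi) => //; last exact: actX.
          apply: (In_trans (t := ts i)); do 3 (apply/In_cat; right); apply/In_cat; left.
          apply/In_map; exists v; split=> //; apply/In_filter; split.
          + by apply/In_mem; rewrite mem_enum.
          + by rewrite Hwv Hs0.
        - have Ev : val i.+1 (fv_ v) = vc c by rewrite /= He'.
          rewrite Ev; apply: (dyn1 i _ _ [:: BAct (ts i)] [:: (fv_ v, vc c)] Hi); last exact: actX.
          + apply: (In_trans (t := ts i)); do 2 (apply/In_cat; right); apply/In_cat; left.
            apply/In_flatten; eexists; split.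
            * apply/In_map; exists v; split; [by apply/In_mem; rewrite mem_enum | reflexivity].
            * apply/In_map; exists c; split=> //; apply/(In_mem (A := C)); by rewrite mem_enum Hwv.
          + by rewrite -Ev; apply: nself.
      * move=> He'.
        have Ev : val i.+1 (fv_ v) = val i (fv_ v) by rewrite /= He'.
        rewrite Ev; apply: (dyn1 i _ _ [:: BFl (fv_ v) (val i (fv_ v))] [:: (fv_ v, val i (fv_ v))] Hi).
        - apply/In_cat; left; apply/In_flatten; eexists; split.
          + apply/In_map; exists v; split; [by apply/In_mem; rewrite mem_enum | reflexivity].
          + apply/In_map; exists (val i (fv_ v)); split=> //; apply/In_mem; exact: (val_fdom _ (ltnW Hi)).
        - by rewrite -Ev; apply: nself.
        - by move=> a [<-|[]]; apply: IH'.
    + have Hs := safe p (ltnW Hi).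
      have HMp := HM p.
      case E1: (Fin W p (ts i) && ~~ Fout W (ts i) p).
      * have -> : val i.+1 (fp_ p) = vb_ false.
          rewrite /= HMp E1; have := Hpre p (andP E1).1.
          by case: ((st i).1 p) Hs => [|[|n]].
        apply: (dyn1 i _ _ [:: BAct (ts i)] [::] Hi) => //; last exact: actX.
        apply: (In_trans (t := ts i)); apply/In_cat; left.
        apply/In_map; exists p; split=> //; apply/In_filter; split=> //.
        by apply/In_mem; rewrite mem_enum.
      * case E2: (Fout W (ts i) p && ~~ Fin W p (ts i)).
        - have -> : val i.+1 (fp_ p) = vb_ true by rewrite /= HMp E1 E2.
          apply: (dyn1 i _ _ [:: BAct (ts i)] [::] Hi) => //; last exact: actX.
          apply: (In_trans (t := ts i)); apply/In_cat; right; apply/In_cat; left.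
          apply/In_map; exists p; split=> //; apply/In_filter; split=> //.
          by apply/In_mem; rewrite mem_enum.
        - have Ev : val i.+1 (fp_ p) = val i (fp_ p) by rewrite /= HMp E1 E2.
          rewrite Ev; apply: (dyn1 i _ _ [:: BFl (fp_ p) (val i (fp_ p))] [:: (fp_ p, val i (fp_ p))] Hi).
          + apply/In_cat; right; apply/In_cat; left; apply/In_flatten; eexists; split.
            * apply/In_map; exists p; split; [by apply/In_mem; rewrite mem_enum | reflexivity].
            * apply/In_map; exists (0 < (st i).1 p); split=> //.
              by case: (0 < _); [left|right; left].
          + by rewrite -Ev; apply: nself.
          + by move=> a [<-|[]]; apply: IH'.
    + have -> : val i.+1 ftr = vb_ true by [].
      apply: (dyn1 i _ _ [:: BAct (ts i)] [::] Hi) => //; last exact: actX.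
      apply: (In_trans (t := ts i)); do 7 (apply/In_cat; right); apply/In_cat; left; by left.
move=> [[i f y|i a]|[i f y|i a]] Sx.
- by case/S_posF: Sx => Hi ->; apply: main.
- by case/S_posA: (Sx) => Hi _; apply: (act i a) => //; left.
- case/S_negF: (Sx) => Hi [Hy Hne].
  have Hr : prog (bc W ngd) l (Rule [:: Neg (GF i f y)] [:: Pos (GF i f (val i f))] [::]).
    do 6 right; exists f, y, (val i f), i.
    split=> //; split=> //; split; first exact: val_fdom.
    by split.
  have Hpos : forall x, List.In x [:: Pos (GF i f (val i f))] -> X x.
    by move=> x [<-|[]]; apply: main.
  have Hnaf : forall x, List.In x (rnaf (Rule [:: Neg (GF i f y)] [:: Pos (GF i f (val i f))] [::])) -> ~ S x by [].
  by have [x [[<-|[]] Hx]] := Hcl _ Hr Hnaf Hpos.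
- by case/S_negA: (Sx) => Hi _; apply: (act i a) => //; right.
Qed.

End Main.

Theorem mainTheorem4 (V C Dom P T : finType) (W : dawnet V C Dom P T)
  (ngd : T -> option (seq (seq (dlit V C))))
  (hW : dawnet_wf W) (hsafe : one_safe W) (hngd : neg_guard_choice W ngd)
  (l : nat) (st : nat -> state V C P) (ts : nat -> T)
  (hrun : run W st ts l) :
  stable_model (prog (bc W ngd) l) (Phi_union W st ts l).
Proof.
split; first exact: S_cons.
split; first exact: S_closed.
exact: S_min.
Qed.
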